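(* Let $p$ be an odd prime, let $m\ge 0$ and $i\ge 0$ be integers, and let $n=(m+i)p-i=i(p-1)+mp\ge 1$. Let $u$ be a partition with $\omega(u)=n$ and $d(u)\le i+1$. Then there exists a reduced partition $u'$ such that $\omega(u')=n$, $d(u')\le i+1$ and $v_p(\tau_u)\ge v_p(\tau_{u'})$.
   Context: A partition is a sequence $u=(u_1,u_2,\dots)$ of nonnegative integers, almost all zero ($u_i$ = number of parts equal to $i$); weight $\omega(u)=\sum_i iu_i$, degree $d(u)=\sum_i u_i$. For a partition $u$ of weight $r\ge1$ with degree $d$, $\gamma_u=\prod_{i\ge1}(i+1)^{u_i}u_i!$ and $\tau_u=(-1)^{d-1}\frac{(r+d-2)!}{\gamma_u}$. $v_p$ is the $p$-adic valuation. A partition $u$ is called reduced if every part $i$ with $u_i\ne 0$ is of the form $p^\alpha-1$ ($\alpha\ge1$), except for at most one part $g$ not of this form, and for such a $g$ one has $u_g=1$. *)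

(* Defs.v *)
From mathcomp Require Import all_boot all_order all_algebra.
Set Implicit Arguments. Unset Strict Implicit. Unset Printing Implicit Defensive.
Import Order.TTheory GRing.Theory Num.Theory.

(* A ipartition is encoded as a finite sequence s : seq nat; the multiplicity
   u_i of the part i (i >= 1) is  nth 0 s (i-1).  Trailing zeros are
   irrelevant; every finitely supported sequence (u_1, u_2, ...) arises. *)
Definition ipartition := seq nat.

Definition mult (u : ipartition) (i : nat) : nat :=
  if i is j.+1 then nth 0 u j else 0.

Definition weight (u : ipartition) : nat :=
  \sum_(1 <= i < (size u).+1) i * mult u i.

Definition degree (u : ipartition) : nat :=
  \sum_(1 <= i < (size u).+1) mult u i.

Definition gamma (u : ipartition) : nat :=
  \prod_(1 <= i < (size u).+1) ((i.+1) ^ (mult u i) * (mult u i)`!).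

Definition tau (u : ipartition) : rat :=
  ((-1) ^+ (degree u).-1 *
  (((weight u + degree u - 2)`!)%:R / (gamma u)%:R))%R.

(* p-adic valuation of a rational number (value 0 at 0, not used there) *)
Definition vp (p : nat) (q : rat) : int :=
  ((logn p `|numq q|%N)%:Z - (logn p `|denq q|%N)%:Z)%R.

Definition pform (p i : nat) : Prop := exists2 a : nat, 1 <= a & i = p ^ a - 1.

Definition reduced (p : nat) (u : ipartition) : Prop :=
  exists g : nat, forall i : nat, 1 <= i -> mult u i <> 0 ->
    pform p i \/ (i = g /\ mult u g = 1).

(* Main.v *)
Require Import Defs.
From mathcomp Require Import all_boot all_order all_algebra.
Import Order.TTheory GRing.Theory Num.Theory.
From mathcomp Require Import zify.
Set Implicit Arguments. Unset Strict Implicit. Unset Printing Implicit Defensive.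

Fixpoint Mf (s : seq nat) : nat :=
  if s is x :: s' then (count_mem x s').+1 * Mf s' else 1.

Lemma Mf_gt0 s : 0 < Mf s.
Proof. by elim: s => [|x s IH] //=; rewrite muln_gt0 IH. Qed.

Lemma prod_dvd (I : Type) (r : seq I) (F G : I -> nat) :
  (forall i, F i %| G i) -> \prod_(i <- r) F i %| \prod_(i <- r) G i.
Proof.
move=> H; elim: r => [|x r IH]; first by rewrite !big_nil.
by rewrite !big_cons dvdn_mul.
Qed.

Definition Mfb (B : nat) (s : seq nat) := \prod_(i < B) (count_mem (i : nat) s)`!.

Lemma MfE B s : all (fun x => x < B) s -> Mf s = Mfb B s.
Proof.
rewrite /Mfb; elim: s => [|x s IH] /=.
  by move=> _; rewrite big1 // => i _; rewrite /= (count_nil).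
case/andP=> xB /IH ->.
rewrite (bigD1 (Ordinal xB)) //= [in RHS](bigD1 (Ordinal xB)) //= eqxx add1n factS.
rewrite mulnA; congr (_ * _); apply: eq_bigr => i.
by rewrite -(inj_eq val_inj) /= eq_sym => /negbTE ->.
Qed.

Definition bnd (s : seq nat) := (\max_(x <- s) x).+1.

Lemma bnd_all s t : all (fun x => x < bnd (s ++ t)) s && all (fun x => x < bnd (s ++ t)) t.
Proof.
rewrite -all_cat; apply/allP => x xs; rewrite ltnS.
by rewrite (big_rem x xs) /= leq_maxl.
Qed.

Lemma Mf_perm s t : perm_eq s t -> Mf s = Mf t.
Proof.
move=> pst; have /andP[Hs Ht] := bnd_all s t.
rewrite (MfE Hs) (MfE Ht) /Mfb; apply: eq_bigr => i _.
by move/permP: pst => ->.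
Qed.

Lemma fact_dvd a b : a`! * b`! %| (a + b)`!.
Proof. by rewrite -(bin_fact (leq_addr b a)) addKn dvdn_mull. Qed.

Lemma Mf_cat_dvd a b : Mf a * Mf b %| Mf (a ++ b).
Proof.
have /andP[Ha Hb] := bnd_all a b.
have Hab : all (fun x => x < bnd (a ++ b)) (a ++ b) by rewrite all_cat Ha Hb.
rewrite (MfE Ha) (MfE Hb) (MfE Hab) /Mfb -big_split /=.
by apply: prod_dvd => i; rewrite count_cat fact_dvd.
Qed.

Lemma Mf_cat_disj a b : (forall x, x \in a -> x \notin b) -> Mf (a ++ b) = Mf a * Mf b.
Proof.
move=> D; have /andP[Ha Hb] := bnd_all a b.
have Hab : all (fun x => x < bnd (a ++ b)) (a ++ b) by rewrite all_cat Ha Hb.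
rewrite (MfE Ha) (MfE Hb) (MfE Hab) /Mfb -big_split /=.
apply: eq_bigr => i _; rewrite count_cat.
case: (boolP ((i : nat) \in a)) => ia.
  by move/D: ia => /count_memPn ->; rewrite addn0 muln1.
by move/count_memPn: ia => ->; rewrite add0n mul1n.
Qed.

Lemma Mf_nseq c v : Mf (nseq c v) = c`!.
Proof.
elim: c => [|c IH] //=; rewrite IH count_nseq /= eqxx mul1n.
by rewrite factS.
Qed.

Lemma perm_nseq_filter (s : seq nat) x :
  perm_eq s (nseq (count_mem x s) x ++ filter (predC1 x) s).
Proof.
have -> : nseq (count_mem x s) x = filter (pred1 x) s.
  elim: s => [|y s IH] //=; rewrite /= eq_sym; case: eqP => [<-|] /=;
  by rewrite ?add0n IH.
by rewrite perm_sym perm_filterC.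
Qed.

Lemma Mf_map_gen (f : nat -> nat) n : forall s0 t, size s0 <= n ->
  Mf s0 * Mf t %| Mf (map f s0 ++ t).
Proof.
elim: n => [|n IH] s0 t.
  by rewrite leqn0 => /nilP ->; rewrite mul1n.
case: s0 => [|x s]; first by rewrite mul1n.
move: (x :: s) (mem_head x s) => s0 xs0 Hs.
move: s0 xs0 Hs => s0 xs0; rewrite -[size s0]/(@size nat s0) => Hs.
pose c := count_mem x s0.
pose s2 := filter (predC1 x) s0.
have P1 := perm_nseq_filter s0 x.
have Hs2 : size s2 <= n.
  have := count_predC (pred1 x) s0.
  have : 0 < count_mem x s0.
    by rewrite lt0n; apply/negP => /eqP/count_memPn; rewrite xs0.
  rewrite /s2 size_filter.
  rewrite (@eq_count _ (predC1 x) (predC (pred1 x))) // -[size s0]/(@size nat s0); move: Hs; lia.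
have -> : Mf s0 = c`! * Mf s2.
  rewrite (Mf_perm P1) Mf_cat_disj ?Mf_nseq // => y.
  by rewrite mem_nseq => /andP[_ /eqP ->]; rewrite mem_filter /= eqxx.
have P2 : perm_eq (map f s0 ++ t) (map f s2 ++ (nseq c (f x) ++ t)).
  have Q : perm_eq (map f s0 ++ t) (map f (nseq c x ++ s2) ++ t).
    by rewrite perm_cat2r; apply: perm_map.
  apply: (perm_trans Q).
  by rewrite map_cat map_nseq -catA perm_catCA.
rewrite (Mf_perm P2) -mulnA mulnCA.
apply: dvdn_trans (IH _ _ Hs2); rewrite dvdn_mul //.
by rewrite -(Mf_nseq c (f x)) Mf_cat_dvd.
Qed.

Lemma Mf_map_dvd (f : nat -> nat) s : Mf s %| Mf (map f s).
Proof.
by have := @Mf_map_gen f (size s) s [::] (leqnn _); rewrite cats0 /= muln1.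
Qed.

Lemma Mf_fact s : Mf s %| (size s)`!.
Proof.
have := Mf_map_dvd (fun _ => 0) s.
have -> : map (fun _ => 0) s = nseq (size s) 0.
  by elim: s => //= x s ->.
by rewrite Mf_nseq.
Qed.

Lemma lg_Mf_cat p a b : logn p (Mf a) + logn p (Mf b) <= logn p (Mf (a ++ b)).
Proof.
rewrite -lognM ?Mf_gt0 //; apply: dvdn_leq_log; [exact: Mf_gt0|exact: Mf_cat_dvd].
Qed.

Lemma lg_Mf_map p f s : logn p (Mf s) <= logn p (Mf (map f s)).
Proof. apply: dvdn_leq_log; [exact: Mf_gt0|exact: Mf_map_dvd]. Qed.

Lemma lg_Mf_disj p a b : (forall x, x \in a -> x \notin b) ->
  logn p (Mf (a ++ b)) = logn p (Mf a) + logn p (Mf b).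
Proof. by move=> D; rewrite Mf_cat_disj // lognM ?Mf_gt0. Qed.

Lemma lg_Mf_fact p s : logn p (Mf s) <= logn p (size s)`!.
Proof. apply: dvdn_leq_log; [exact: fact_gt0|exact: Mf_fact]. Qed.

Lemma Mf_rem x s : x \in s -> Mf s = count_mem x s * Mf (rem x s).
Proof.
move=> xs; rewrite (Mf_perm (perm_to_rem xs)) /=.
by rewrite count_mem_rem eqxx subn1 prednK // lt0n; apply/eqP/count_memPn; rewrite xs.
Qed.

Lemma lg_Mf_rem p x s : x \in s ->
  logn p (Mf s) <= logn p (count_mem x s) + logn p (size s).-1`!.
Proof.
move=> xs; rewrite (Mf_rem xs) lognM ?Mf_gt0 //; last first.
  by rewrite lt0n; apply/eqP/count_memPn; rewrite xs.
rewrite leq_add2l; apply: leq_trans (lg_Mf_fact p _) _.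
by rewrite size_rem.
Qed.

Lemma all_dvd_count p n : forall s : seq nat, size s <= n ->
  (forall v, v \in s -> p %| count_mem v s) -> p %| size s /\ p %| sumn s.
Proof.
elim: n => [|n IH] s.
  by rewrite leqn0 => /nilP -> _; rewrite dvdn0.
case: s => [_ _|x s0]; first by rewrite dvdn0.
move: (x :: s0) (mem_head x s0) => s xs Hs H.
have P1 := perm_nseq_filter s x.
pose c := count_mem x s.
pose s2 := filter (predC1 x) s.
have cpos : 0 < c by rewrite lt0n; apply/eqP/count_memPn; rewrite xs.
have E1 : size s = c + size s2 by rewrite (perm_size P1) size_cat size_nseq.
have E2 : sumn s = x * c + sumn s2 by rewrite (perm_sumn P1) sumn_cat sumn_nseq.
have Hs2 : size s2 <= n by move: Hs; rewrite -[size s]/(@size nat s) E1; lia.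
have H2 : forall v, v \in s2 -> p %| count_mem v s2.
  move=> v; rewrite mem_filter => /andP[vx vs].
  have := H v vs; rewrite (permP P1) count_cat count_nseq /= eq_sym.
  by rewrite (negbTE vx).
have [D1 D2] := IH s2 Hs2 H2.
have Dc : p %| c by apply: H.
rewrite -[size s]/(@size nat s) E1 E2; split; apply: dvdn_add => //.
by apply: dvdn_mull.
Qed.

Lemma sum_lb (s : seq nat) z : all (fun x => 0 < x) s ->
  size s + count_mem z s * (z - 1) <= sumn s.
Proof.
elim: s => [|x s IH] //= /andP[xp /IH]; case: (eqVneq x z) => [<-|_] /=; rewrite ?eqxx ?add1n ?add0n; lia.
Qed.

Lemma sumn_map_le (f : nat -> nat) (s : seq nat) : (forall x, x \in s -> f x <= x) -> sumn (map f s) <= sumn s.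
Proof.
elim: s => //= x s IH H; apply: leq_add; first by apply: H; rewrite mem_head.
by apply: IH => y ys; apply: H; rewrite inE ys orbT.
Qed.

Definition Wt p (w : seq nat) := sumn (map (logn p) w) + logn p (Mf w).
Definition ispw p x := x == p ^ (logn p x).
Definition redY p (w : seq nat) := exists g, forall x, x \in w ->
  ispw p x \/ (x = g /\ count_mem g w = 1).

Lemma ispw_exp p a : prime p -> ispw p (p ^ a).
Proof. by move=> pp; rewrite /ispw pfactorK. Qed.

Lemma ispw1 p : ispw p 1.
Proof. by rewrite /ispw logn1. Qed.

Lemma redY_cons p R (s : seq nat) : (forall x, x \in s -> ispw p x) -> redY p (R :: s).
Proof.
move=> H; exists R => x; rewrite inE => /orP[/eqP ->|xs]; last by left; apply: H.
case: (boolP (ispw p R)) => [|nR]; first by left.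
right; split => //=; rewrite eqxx.
suff -> : count_mem R s = 0 by [].
apply/count_memPn; apply/negP => /H; by rewrite (negbTE nR).
Qed.

Lemma Wt_cons p x s : logn p x + Wt p s <= Wt p (x :: s).
Proof.
rewrite /Wt /= -addnA leq_add2l leq_add2l /=.
by rewrite lognM ?Mf_gt0 // leq_addl.
Qed.

Lemma Wt_cat p a b : Wt p a + Wt p b <= Wt p (a ++ b).
Proof.
rewrite /Wt map_cat sumn_cat.
have := lg_Mf_cat p a b; lia.
Qed.

Lemma sumn_log0 p (s : seq nat) : (forall x, x \in s -> logn p x = 0) -> sumn (map (logn p) s) = 0.
Proof.
elim: s => //= x s IH H; rewrite H ?mem_head // IH // => y ys; apply: H.
by rewrite inE ys orbT.
Qed.

Lemma Wt_nseq1 p c : Wt p (nseq c 1) = logn p c`!.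
Proof.
rewrite /Wt Mf_nseq sumn_log0 // => x; by rewrite mem_nseq => /andP[_ /eqP ->]; rewrite logn1.
Qed.

Lemma Wt_pow p (P : seq nat) : prime p ->
  Wt p P <= Wt p (map (fun x => p ^ logn p x) P).
Proof.
move=> pp; rewrite /Wt; apply: leq_add; last exact: lg_Mf_map.
rewrite -map_comp; apply/eq_leq; congr sumn; apply: eq_map => x /=.
by rewrite pfactorK.
Qed.

Lemma sumn_divp p (s : seq nat) : (forall x, x \in s -> p %| x) ->
  sumn (map (fun x => x %/ p) s) * p = sumn s.
Proof.
elim: s => //= x s IH H; rewrite mulnDl divnK ?H ?mem_head // IH // => y ys.
by apply: H; rewrite inE ys orbT.
Qed.

Lemma sumn_mulp p (s : seq nat) : sumn (map (fun y => p * y) s) = p * sumn s.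
Proof. by elim: s => [|x s IH] /=; rewrite ?muln0 // IH mulnDr. Qed.

Lemma count_mulp p (s : seq nat) g : 0 < p ->
  count_mem (p * g) (map (fun y => p * y) s) = count_mem g s.
Proof.
move=> p0; rewrite count_map; apply: eq_count => y /=.
by rewrite eqn_pmul2l.
Qed.

Lemma sumn_lg_mulp p (s : seq nat) : prime p -> all (fun x => 0 < x) s ->
  sumn (map (logn p) (map (fun y => p * y) s)) = size s + sumn (map (logn p) s).
Proof.
move=> pp; elim: s => //= x s IH /andP[xp /IH ->].
have L : logn p p = 1 := pfactorK 1 pp.
rewrite lognM ?(prime_gt0 pp) // L; lia.
Qed.

Lemma map_mul_div p (s : seq nat) : (forall x, x \in s -> p %| x) ->
  map (fun y => p * y) (map (fun x => x %/ p) s) = s.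
Proof.
elim: s => //= x s IH H; rewrite mulnC divnK ?H ?mem_head // IH // => y ys.
by apply: H; rewrite inE ys orbT.
Qed.

Theorem thmY p : prime p -> forall w : seq nat, all (fun x => 0 < x) w ->
  exists w', [/\ all (fun x => 0 < x) w', redY p w', size w' = size w,
                 sumn w' = sumn w & Wt p w <= Wt p w'].
Proof.
move=> pp w; have [n Hn] := ubnP (sumn w); elim: n w Hn => // n IH w Hn wpos.
have p2 : 1 < p := prime_gt1 pp.
have wp : forall x, x \in w -> 0 < x := fun x => (allP wpos) x.
pose a := fun x : nat => p %| x.
pose P := filter a w. pose Z := filter (predC a) w.
have PW : perm_eq (P ++ Z) w by rewrite perm_filterC.
have Esz : size w = size P + size Z by rewrite -(perm_size PW) size_cat.
have Esm : sumn w = sumn P + sumn Z by rewrite -(perm_sumn PW) sumn_cat.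
have PP : forall x, x \in P -> p %| x /\ 0 < x.
  by move=> x; rewrite mem_filter => /andP[ax /wp].
have ZP : forall x, x \in Z -> ~~ (p %| x) /\ 0 < x.
  by move=> x; rewrite mem_filter => /andP[ax /wp].
have EW : Wt p w = sumn (map (logn p) P) + logn p (Mf P) + logn p (Mf Z).
  rewrite /Wt -(perm_sumn (perm_map _ PW)) -(Mf_perm PW) map_cat sumn_cat.
  rewrite (@sumn_log0 p Z); last first.
    by move=> x /ZP [nd _]; apply: logn_coprime; rewrite prime_coprime.
  rewrite lg_Mf_disj; first by rewrite addn0 addnA.
  by move=> x /PP [dx _]; apply/negP => /ZP []; rewrite dx.
case: (boolP (has (fun x => 1 < x) Z)) => [/hasP [z0 z0Z z0gt]| noZ].
have [z0nd z0p] := ZP z0 z0Z.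
have Zpos : all (fun x => 0 < x) Z by apply/allP => x /ZP [].
pose E := map (fun x => p ^ logn p x) P.
have EP : sumn E <= sumn P.
  apply: sumn_map_le => x /PP [dx xp]; apply: dvdn_leq => //; exact: pfactor_dvdnn.
have Epw : forall x, x \in E -> ispw p x by move=> x /mapP [y _ ->]; exact: ispw_exp.
have Epos : all (fun x => 0 < x) E.
  by apply/allP => x /mapP [y _ ->]; rewrite expn_gt0 prime_gt0.
pose k := size Z.
have c0 : 0 < count_mem z0 Z by rewrite lt0n; apply/eqP/count_memPn; rewrite z0Z.
have hsZ := sum_lb z0 Zpos.
have mz0 : count_mem z0 Z <= count_mem z0 Z * (z0 - 1).
  by apply: leq_pmulr; rewrite subn_gt0.
have ck : count_mem z0 Z <= k := count_size _ _.
have WE : Wt p P <= Wt p E := Wt_pow P pp.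
have EW2 : Wt p w = Wt p P + logn p (Mf Z) by rewrite EW.
have nsE : forall c x, x \in nseq c 1 ++ E -> ispw p x.
  move=> c x; rewrite mem_cat => /orP[]; last exact: Epw.
  by rewrite mem_nseq => /andP[_ /eqP ->]; exact: ispw1.
have nsP : forall c, all (fun x => 0 < x) (nseq c 1 ++ E).
  move=> c; rewrite all_cat Epos andbT.
  by apply/allP => x; rewrite mem_nseq => /andP[_ /eqP ->].
case: (boolP (has (fun v => ~~ (p %| count_mem v Z)) Z)) => [/hasP [v0 v0Z v0nd] | alld].
  pose R := sumn Z - k.-1 + (sumn P - sumn E).
  exists (R :: (nseq k.-1 1 ++ E)); split.
  - rewrite /= nsP andbT; move: hsZ EP c0 z0gt ck mz0; rewrite -/k.
    rewrite /R; lia.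
  - by apply: redY_cons; apply: nsE.
  - rewrite /= size_cat size_nseq size_map Esz -/k; move: ck c0; lia.
  - rewrite /= sumn_cat sumn_nseq Esm /R -/k; move: hsZ EP c0 ck; lia.
  - apply: leq_trans (Wt_cons p R _); apply: leq_trans (leq_addl _ _).
    apply: leq_trans (Wt_cat _ _ _); rewrite Wt_nseq1 EW2.
    have := lg_Mf_rem p v0Z; rewrite (@logn_coprime p (count_mem v0 Z)) ?prime_coprime // add0n -/k.
    move: WE; lia.
have alld' : forall v, v \in Z -> p %| count_mem v Z.
  by move=> v vZ; move/hasPn: alld => /(_ v vZ) /=; rewrite negbK.
have [Dk DS] := all_dvd_count (leqnn _) alld'.
pose m0 := count_mem z0 Z; pose h := logn p m0.
have Dm0 : p %| m0 := alld' z0 z0Z.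
have m0p : p <= m0 by apply: dvdn_leq.
have hm0 : p ^ h <= m0 by apply: dvdn_leq => //; exact: pfactor_dvdnn.
have hpos : 0 < p ^ h by rewrite expn_gt0 prime_gt0.
have mz : m0 <= m0 * (z0 - 1) := mz0.
pose R := sumn Z - (k - 2) - p ^ h + (sumn P - sumn E).
exists (R :: (p ^ h :: (nseq (k - 2) 1 ++ E))); split.
- rewrite /= nsP hpos !andbT; move: hsZ EP c0 z0gt ck mz m0p hm0 p2; rewrite -/k -/m0.
  rewrite /R; lia.
- apply: redY_cons => x; rewrite inE => /orP[/eqP ->|]; first exact: ispw_exp.
  exact: nsE.
- rewrite /= size_cat size_nseq size_map Esz -/k; move: ck c0 m0p p2; rewrite -/m0; lia.
- rewrite /= sumn_cat sumn_nseq Esm /R -/k; move: hsZ EP c0 ck mz m0p hm0 p2; rewrite -/m0; lia.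
- apply: leq_trans (Wt_cons p R _); apply: leq_trans (leq_addl _ _).
  apply: leq_trans (Wt_cons p (p ^ h) _); rewrite pfactorK //.
  apply: leq_trans (leq_add (leqnn _) (Wt_cat _ _ _)); rewrite Wt_nseq1 EW2.
  have := lg_Mf_rem p z0Z; rewrite -/k -/m0 -/h.
  have k2 : 2 <= k by move: ck m0p p2; rewrite -/m0; lia.
  have -> : k.-1 = (k - 2).+1 by move: k2; lia.
  rewrite factS lognM // ?fact_gt0 //.
  rewrite (@logn_coprime p (k - 2).+1) ?add0n; last first.
    rewrite prime_coprime //; apply/negP => D1.
    have := dvdn_sub Dk D1; rewrite (_ : k - (k - 2).+1 = 1); last by move: k2; lia.
    by rewrite dvdn1 => /eqP p1; move: p2; rewrite p1.
  move: WE; lia.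
have Z1 : Z = nseq (size Z) 1.
  apply/all_pred1P/allP => x xZ /=; have [_ xp] := ZP x xZ.
  apply/eqP; move/hasPn: noZ => /(_ x xZ) /=; lia.
case: (boolP (P == [::])) => [/eqP P0|Pn0].
  exists w; split => //; exists 0 => x; rewrite -(perm_mem PW) /=.
  rewrite P0 /= Z1 mem_nseq => /andP[_ /eqP ->]; left; exact: ispw1.
pose w2 := map (fun x => x %/ p) P.
have Ew2 : sumn w2 * p = sumn P by apply: sumn_divp => x /PP [].
have Ppos : 0 < sumn P.
  case: (P) Pn0 PP => // x s _ H /=; have [_ xp] := H x (mem_head x s); lia.
have Lw2 : sumn w2 < n.
  have : sumn w2 < sumn P by rewrite -Ew2 ltn_Pmulr // -(ltn_pmul2r (ltnW p2)) Ew2.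
  move: Hn; rewrite Esm; lia.
have w2pos : all (fun x => 0 < x) w2.
  apply/allP => y /mapP [x /PP [dx xp] ->]; rewrite divn_gt0 ?prime_gt0 //.
  exact: dvdn_leq.
have [w3 [w3pos [g Hg] sz3 sm3 Wt3]] := IH w2 Lw2 w2pos.
have P2 : map (fun y => p * y) w2 = P by rewrite /w2 map_mul_div // => x /PP [].
have g3 : 0 < g -> 1 < p * g by move=> gp; lia.
exists (nseq (size Z) 1 ++ map (fun y => p * y) w3); split.
- rewrite all_cat; apply/andP; split.
    by apply/allP => x; rewrite mem_nseq => /andP[_ /eqP ->].
  apply/allP => x /mapP [y yw ->]; rewrite muln_gt0 prime_gt0 //; exact: (allP w3pos).
- exists (p * g) => x; rewrite mem_cat => /orP[].
    by rewrite mem_nseq => /andP[_ /eqP ->]; left; exact: ispw1.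
  move=> /mapP [y yw ->]; case: (Hg y yw) => [Hy|[yg cg]].
    by left; rewrite (eqP Hy) -expnS; exact: ispw_exp.
  right; split; first by rewrite yg.
  have gp : 0 < g by rewrite -yg; exact: (allP w3pos).
  rewrite count_cat count_nseq count_mulp ?prime_gt0 // cg /=.
  by rewrite eq_sym (negbTE (_ : p * g != 1)) //; rewrite neq_ltn g3 ?orbT.
- by rewrite size_cat size_nseq size_map sz3 /w2 size_map Esz addnC.
- rewrite sumn_cat sumn_nseq sumn_mulp sm3 Esm; have := Ew2.
  have : sumn Z = size Z by rewrite {1}Z1 sumn_nseq mul1n.
  lia.
- have MZ : Mf Z = (size Z)`! by rewrite {1}Z1 Mf_nseq.
  apply: leq_trans (Wt_cat _ _ _); rewrite Wt_nseq1 EW MZ.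
  rewrite /Wt sumn_lg_mulp // -{1}P2 sumn_lg_mulp // size_map sz3.
  have := lg_Mf_map p (fun y => p * y) w3.
  have := lg_Mf_map p (fun x => x %/ p) P.
  rewrite /Wt in Wt3; move: Wt3.
  rewrite /w2 ?size_map; lia.
Qed.

Definition redL p (s : seq nat) := exists g, forall x, x \in s ->
  pform p x \/ (x = g /\ count_mem g s = 1).
Definition Gm (s : seq nat) := \prod_(x <- s) x.+1 * Mf s.
Definition LG p (s : seq nat) := sumn (map (logn p) (map succn s)).

Lemma lg_Gm p s : logn p (Gm s) = LG p s + logn p (Mf s).
Proof.
rewrite /Gm lognM ?Mf_gt0 //; last by rewrite prodn_gt0.
congr (_ + _); rewrite /LG; elim: s => [|x s IH]; first by rewrite big_nil logn1.
by rewrite big_cons lognM // ?prodn_gt0 // IH.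
Qed.

Lemma sumn_pm1 p (w : seq nat) : 0 < p -> all (fun x => 0 < x) w ->
  sumn (map (fun y => p * y - 1) w) + size w = p * sumn w.
Proof.
move=> p0; elim: w => [|y w IH] /=; first by rewrite muln0.
case/andP=> yp /IH; rewrite mulnDr.
have : 0 < p * y by rewrite muln_gt0 p0.
lia.
Qed.

Lemma sumn_succ_div p (s : seq nat) : (forall x, x \in s -> p %| x.+1) ->
  p * sumn (map (fun x => x.+1 %/ p) s) = sumn s + size s.
Proof.
elim: s => [|x s IH] H /=; first by rewrite muln0.
rewrite mulnDr mulnC divnK ?H ?mem_head // IH; first lia.
by move=> y ys; apply: H; rewrite inE ys orbT.
Qed.

Lemma dvd_sumsucc p (s : seq nat) : (forall x, x \in s -> p %| x.+1) ->
  p %| sumn s + size s.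
Proof.
move=> H; rewrite -(@sumn_succ_div p) //; exact: dvdn_mulr.
Qed.

Lemma keyZ p (Z : seq nat) A : prime p -> 0 < size Z ->
  ((forall v, v \in Z -> p %| count_mem v Z) -> ~~ (p %| A + size Z)) ->
  logn p A`! + logn p (Mf Z) <= logn p (A + size Z - 1)`!.
Proof.
move=> pp kp Hb.
case: (boolP (has (fun v => ~~ (p %| count_mem v Z)) Z)) => [/hasP [v0 v0Z v0nd]|alld].
  have := lg_Mf_rem p v0Z.
  rewrite (@logn_coprime p (count_mem v0 Z)) ?prime_coprime // add0n => H1.
  have H2 : logn p A`! + logn p (size Z).-1`! <= logn p (A + (size Z).-1)`!.
    rewrite -lognM ?fact_gt0 //; apply: dvdn_leq_log; [exact: fact_gt0|exact: fact_dvd].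
  have -> : A + size Z - 1 = A + (size Z).-1 by move: kp; lia.
  by apply: leq_trans (leq_add (leqnn _) H1) _.
have alld' : forall v, v \in Z -> p %| count_mem v Z.
  by move=> v vZ; move/hasPn: alld => /(_ v vZ) /=; rewrite negbK.
have nd := Hb alld'.
have H1 := lg_Mf_fact p Z.
have H2 : logn p A`! + logn p (size Z)`! <= logn p (A + size Z)`!.
  rewrite -lognM ?fact_gt0 //; apply: dvdn_leq_log; [exact: fact_gt0|exact: fact_dvd].
have L0 : logn p (A + size Z) = 0 by rewrite logn_coprime // prime_coprime.
have F : (A + size Z)`! = (A + size Z) * (A + size Z - 1)`!.
  have E : A + size Z = (A + size Z - 1).+1 by move: kp; lia.
  move: (A + size Z - 1) E => q ->; by rewrite factS.
move: H2; rewrite F lognM ?fact_gt0 // ?L0 ?add0n => [H2|]; last by move: kp; lia.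
by apply: leq_trans (leq_add (leqnn _) H1) H2.
Qed.

Lemma topP p s : prime p -> all (fun x => 0 < x) s -> (forall x, x \in s -> p %| x.+1) ->
  exists s', [/\ all (fun x => 0 < x) s', redL p s', sumn s' = sumn s, size s' = size s &
    logn p (Gm s) <= logn p (Gm s')].
Proof.
move=> pp spos H; have p2 := prime_gt1 pp; have p0 := prime_gt0 pp.
pose w := map (fun x => x.+1 %/ p) s.
have wpos : all (fun x => 0 < x) w.
  apply/allP => y /mapP [x xs ->]; rewrite divn_gt0 //; apply: dvdn_leq => //; exact: H.
have Sw : map succn s = map (fun y => p * y) w.
  rewrite /w -map_comp; apply/eq_in_map => x xs /=; rewrite mulnC divnK //; exact: H.
have [w' [w'pos [g Hg] sz sm Wle]] := thmY pp wpos.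
pose f := fun y => p * y - 1.
have fy : forall y, y \in w' -> (f y).+1 = p * y.
  move=> y yw; have yp := (allP w'pos) y yw; have := leq_pmulr p yp; rewrite /f; lia.
have Sw' : map succn (map f w') = map (fun y => p * y) w'.
  by rewrite -map_comp; apply/eq_in_map => y yw /=; apply: fy.
exists (map f w'); split.
- apply/allP => x /mapP [y yw ->]; have yp := (allP w'pos) y yw.
  have := leq_pmulr p yp; rewrite /f; lia.
- exists (f g) => x /mapP [y yw ->]; case: (Hg y yw) => [Hy|[yg cg]].
    by left; exists (logn p y).+1 => //; rewrite /f expnS -(eqP Hy).
  right; split; first by rewrite yg.
  have gp : 0 < g by rewrite -yg; exact: (allP w'pos).
  rewrite count_map -cg; apply: eq_in_count => z zw /=.
  have zp : 0 < z := (allP w'pos) z zw.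
  apply/eqP/eqP => [E|->//]; apply/eqP; rewrite -(eqn_pmul2l p0); apply/eqP.
  have := leq_pmulr p zp; have := leq_pmulr p gp; move: E; rewrite /f; lia.
- have := sumn_pm1 p0 w'pos; have := sumn_succ_div H.
  rewrite sz sm /w size_map /f; lia.
- by rewrite size_map sz /w size_map.
- rewrite !lg_Gm /LG Sw Sw' !sumn_lg_mulp //.
  have := lg_Mf_map p (fun x => x.+1 %/ p) s.
  have := lg_Mf_map p f w'.
  move: Wle; rewrite /Wt sz -/w; lia.
Qed.

Lemma topZ p s : prime p -> all (fun x => 0 < x) s -> has (fun x => ~~ (p %| x.+1)) s ->
  exists s', [/\ all (fun x => 0 < x) s', redL p s', sumn s' = sumn s, size s' <= size s &
    logn p (sumn s' + size s' - 2)`! + logn p (Gm s) <=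
    logn p (sumn s + size s - 2)`! + logn p (Gm s')].
Proof.
move=> pp spos hZ; have p2 := prime_gt1 pp; have p0 := prime_gt0 pp.
have sp : forall x, x \in s -> 0 < x := fun x => (allP spos) x.
pose a := fun x : nat => p %| x.+1.
pose P := filter a s. pose Z := filter (predC a) s.
have PW : perm_eq (P ++ Z) s by rewrite perm_filterC.
have Esz : size s = size P + size Z by rewrite -(perm_size PW) size_cat.
have Esm : sumn s = sumn P + sumn Z by rewrite -(perm_sumn PW) sumn_cat.
have PP : forall x, x \in P -> p %| x.+1 /\ 0 < x.
  by move=> x; rewrite mem_filter => /andP[ax /sp].
have ZP : forall x, x \in Z -> ~~ (p %| x.+1) /\ 0 < x.
  by move=> x; rewrite mem_filter => /andP[ax /sp].
have Zpos : all (fun x => 0 < x) Z by apply/allP => x /ZP [].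
have [z0 z0Z] : exists z0, z0 \in Z.
  by case/hasP: hZ => x xs nx; exists x; rewrite mem_filter /= nx.
have c0 : 0 < count_mem z0 Z by rewrite lt0n; apply/eqP/count_memPn; rewrite z0Z.
have ck : count_mem z0 Z <= size Z := count_size _ _.
have sZ : size Z <= sumn Z by apply: leq_trans (sum_lb z0 Zpos); exact: leq_addr.
pose E := map (fun x => p ^ logn p x.+1 - 1) P.
have Elog : forall x, x \in P -> 0 < logn p x.+1.
  by move=> x /PP [dx _]; rewrite logn_gt0 mem_primes pp dx.
have EP : sumn E <= sumn P.
  apply: sumn_map_le => x /PP [dx xp].
  have := dvdn_leq (ltn0Sn x) (pfactor_dvdnn p x.+1); lia.
have Ebig : forall x, x \in P -> p <= p ^ logn p x.+1.
  by move=> x /Elog e1; rewrite -{1}(expn1 p) leq_pexp2l.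
have Epf : forall x, x \in E -> pform p x.
  by move=> x /mapP [y /Elog yl ->]; exists (logn p y.+1).
have Epos : all (fun x => 0 < x) E.
  by apply/allP => x /mapP [y /Ebig yb ->]; move: yb p2; lia.
have LGE : LG p E = LG p P.
  rewrite /LG -!map_comp; congr sumn; apply/eq_in_map => x xP /=.
  have := Ebig x xP; move: p2 => p2' yb.
  by rewrite subn1 prednK ?pfactorK //; move: p2' yb; lia.
have LGs : LG p s = LG p P.
  rewrite /LG -(perm_sumn (perm_map _ (perm_map _ PW))) !map_cat sumn_cat.
  rewrite (@sumn_log0 p (map succn Z)) ?addn0 // => y /mapP [x /ZP [nd _] ->].
  by apply: logn_coprime; rewrite prime_coprime.
have MFs : logn p (Mf s) = logn p (Mf P) + logn p (Mf Z).
  rewrite -(Mf_perm PW) lg_Mf_disj // => x /PP [dx _]; apply/negP => /ZP [].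
  by rewrite dx.
pose R := sumn s - sumn E.
have Rp : 0 < R by rewrite /R; move: Esm EP sZ c0 ck; lia.
exists (R :: E); split.
- by rewrite /= Rp Epos.
- exists R => x; rewrite inE => /orP [/eqP -> | xE]; last by left; exact: Epf.
  case: (boolP (R \in E)) => [RE|nRE]; first by left; exact: Epf.
  right; split => //=; rewrite eqxx.
  by have -> : count_mem R E = 0 by apply/count_memPn.
- by rewrite /= /R; move: EP Esm; lia.
- by rewrite /= size_map Esz; move: c0 ck; lia.
rewrite !lg_Gm MFs LGs.
have GE : LG p P + logn p (Mf P) <= LG p (R :: E) + logn p (Mf (R :: E)).
  rewrite /LG /= -/(LG p E) LGE /=.
  rewrite lognM ?Mf_gt0 //.
  have := lg_Mf_map p (fun x => p ^ logn p x.+1 - 1) P; rewrite -/E -/(LG p P); lia.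
have SE : sumn (R :: E) = sumn s by rewrite /= /R; move: EP Esm; lia.
have ZE : size (R :: E) = (size P).+1 by rewrite /= size_map.
rewrite SE ZE.
have K := @keyZ p Z (sumn s + (size P).+1 - 2) pp (leq_trans c0 ck).
have K' : logn p (sumn s + (size P).+1 - 2)`! + logn p (Mf Z) <=
          logn p (sumn s + size s - 2)`!.
  have -> : sumn s + size s - 2 = sumn s + (size P).+1 - 2 + size Z - 1.
    by rewrite Esz; move: Esm sZ c0 ck; lia.
  apply: K => alld.
  have [Dk DS] := all_dvd_count (leqnn _) alld.
  have DP := @dvd_sumsucc p P (fun x xP => proj1 (PP x xP)).
  apply/negP => D1.
  have D2 : p %| (sumn s + (size P).+1 - 2 + size Z).+1.
    have -> : (sumn s + (size P).+1 - 2 + size Z).+1 = (sumn P + size P) + sumn Z + size Z.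
      by move: Esm sZ c0 ck; lia.
    exact: dvdn_add (dvdn_add DP DS) Dk.
  have := dvdn_sub D2 D1; rewrite subSnn dvdn1 => /eqP p1.
  by move: p2; rewrite p1.
move: K' GE; lia.
Qed.

Lemma sum_count (F : nat -> nat) (s : seq nat) B :
  (forall x, x \in s -> 1 <= x < B) ->
  \sum_(x <- s) F x = \sum_(1 <= i < B) F i * count_mem i s.
Proof.
elim: s => [|x s IH] H.
  by rewrite big_nil big1 // => i _; rewrite muln0.
rewrite big_cons IH; last by move=> y ys; apply: H; rewrite inE ys orbT.
have xB := H x (mem_head x s).
have -> : \sum_(1 <= i < B) F i * count_mem i (x :: s) =
    \sum_(1 <= i < B) F i * (x == i) + \sum_(1 <= i < B) F i * count_mem i s.
  by rewrite -big_split; apply: eq_bigr => i _; rewrite /= mulnDr.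
congr (_ + _).
rewrite (bigD1_seq x) ?mem_index_iota ?iota_uniq //= eqxx muln1 big1 ?addn0 //.
by move=> i /negbTE; rewrite eq_sym => ->; rewrite muln0.
Qed.

Lemma prod_count (F : nat -> nat) (s : seq nat) B :
  (forall x, x \in s -> 1 <= x < B) ->
  \prod_(x <- s) F x = \prod_(1 <= i < B) F i ^ count_mem i s.
Proof.
elim: s => [|x s IH] H.
  by rewrite big_nil big1 // => i _; rewrite expn0.
rewrite big_cons IH; last by move=> y ys; apply: H; rewrite inE ys orbT.
have xB := H x (mem_head x s).
have -> : \prod_(1 <= i < B) F i ^ count_mem i (x :: s) =
    \prod_(1 <= i < B) F i ^ (x == i) * \prod_(1 <= i < B) F i ^ count_mem i s.
  by rewrite -big_split; apply: eq_bigr => i _; rewrite /= expnD.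
congr (_ * _).
rewrite (bigD1_seq x) ?mem_index_iota ?iota_uniq //= eqxx expn1 big1 ?muln1 //.
by move=> i /negbTE; rewrite eq_sym => ->; rewrite expn0.
Qed.

Lemma transfer (u : ipartition) (s : seq nat) :
  all (fun x => 0 < x) s -> (forall i, 1 <= i -> mult u i = count_mem i s) ->
  [/\ weight u = sumn s, degree u = size s & gamma u = Gm s].
Proof.
move=> spos Hm.
have Hin : forall x, x \in s -> 1 <= x < (size u).+1.
  move=> x xs; have xp := (allP spos) x xs; rewrite xp /=.
  have : count_mem x s != 0 by apply/eqP/count_memPn; rewrite xs.
  rewrite -Hm // /mult; case: x xp {xs} => // x _; rewrite ltnS.
  move=> H; rewrite ltnNge; apply/negP => /(nth_default 0) E0; by rewrite E0 eqxx in H.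
have E : forall (F : nat -> nat -> nat),
    \big[addn/0]_(1 <= i < (size u).+1) F i (mult u i) =
    \big[addn/0]_(1 <= i < (size u).+1) F i (count_mem i s).
  move=> F; rewrite big_nat_cond [RHS]big_nat_cond; apply: eq_bigr => i /andP[/andP[i1 _] _].
  by rewrite Hm.
split.
- rewrite /weight (E (fun i m => i * m)) sumnE (sum_count id Hin) //.
- rewrite /degree (E (fun i m => m)) -[size s]sum1_size.
  rewrite (_ : \sum_(j <- s) 1 = \sum_(j <- s) (fun _ => 1) j) // (sum_count _ Hin).
  by apply: eq_bigr => i _; rewrite mul1n.
- rewrite /gamma /Gm.
  rewrite big_nat_cond (eq_bigr (fun i => i.+1 ^ count_mem i s * (count_mem i s)`!)); last first.
    by move=> i /andP[/andP[i1 _] _]; rewrite Hm.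
  rewrite -big_nat_cond big_split /= -(prod_count (fun x => x.+1) Hin); congr (_ * _).
  have Hb : all (fun x => x < (size u).+1) s by apply/allP => x /Hin /andP[].
  rewrite (MfE Hb) /Mfb -(big_mkord xpredT (fun i => (count_mem i s)`!)).
  have c0 : count_mem 0 s = 0 by apply/count_memPn; apply/negP => /Hin.
  by rewrite [RHS]big_ltn // c0 mul1n.
Qed.

Lemma vp_frac p (a b k : nat) : 0 < a -> 0 < b ->
  vp p ((-1) ^+ k * ((a%:R : rat) / b%:R))%R = ((logn p a)%:Z - (logn p b)%:Z)%R.
Proof.
move=> a0 b0.
set q : rat := (a%:R / b%:R)%R.
have Hs : vp p ((-1) ^+ k * q)%R = vp p q.
  rewrite /vp -signr_odd; case: (odd k); rewrite ?expr1 ?expr0 ?mul1r ?mulN1r //.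
  by rewrite numqN denqN abszN.
rewrite Hs.
have dq : ((denq q)%:~R : rat) != 0%R by rewrite intr_eq0 denq_neq0.
have bq : (b%:R : rat) != 0%R by rewrite pnatr_eq0 -lt0n.
have E1 : ((numq q)%:~R : rat) = (q * (denq q)%:~R)%R.
  by rewrite -{2}(divq_num_den q) mulfVK.
have E2 : ((numq q)%:~R * b%:R : rat) = (a%:R * (denq q)%:~R)%R.
  by rewrite E1 /q mulrAC mulfVK.
have E3 : (numq q * b%:Z)%R = (a%:Z * denq q)%R.
  apply: (@intr_inj rat); by rewrite !intrM.
have E4 : (`|numq q| * b = a * `|denq q|)%N.
  by have := congr1 absz E3; rewrite !abszM.
have nq : (0 < `|numq q|)%N.
  rewrite absz_gt0 numq_eq0 /q mulf_eq0 invr_eq0 negb_or pnatr_eq0 -lt0n a0 /=.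
  by rewrite pnatr_eq0 -lt0n.
have dq0 : (0 < `|denq q|)%N by rewrite absz_gt0 denq_neq0.
have := congr1 (logn p) E4; rewrite !lognM // => E5.
rewrite /vp; lia.
Qed.

Lemma vp_tau p u : 0 < gamma u ->
  vp p (tau u) = ((logn p (weight u + degree u - 2)`!)%:Z - (logn p (gamma u))%:Z)%R.
Proof. by move=> g0; rewrite /tau vp_frac // fact_gt0. Qed.

Fixpoint fm (k : nat) (u : seq nat) : seq nat :=
  if u is c :: u' then nseq c k ++ fm k.+1 u' else [::].

Lemma count_fm u : forall k i,
  count_mem i (fm k u) = if k <= i then nth 0 u (i - k) else 0.
Proof.
elim: u => [|c u IH] k i /=; first by rewrite nth_nil; case: ifP.
rewrite count_cat count_nseq IH /=.
case: (ltngtP k i) => [ki|ik|->].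
- rewrite mul0n add0n; have -> : i - k = (i - k.+1).+1 by lia.
  by [].
- by [].
- by rewrite mul1n addn0 subnn.
Qed.

Lemma mem_fm u : forall k x, x \in fm k u -> k <= x.
Proof.
elim: u => [|c u IH] k x //=; rewrite mem_cat => /orP[].
  by rewrite mem_nseq => /andP[_ /eqP ->].
by move/IH; apply: ltnW.
Qed.

Definition toMult (s : seq nat) : ipartition := mkseq (fun j => count_mem j.+1 s) (bnd s).

Lemma mult_toMult s i : 1 <= i -> mult (toMult s) i = count_mem i s.
Proof.
case: i => // j _; rewrite /mult /toMult.
case: (ltnP j (bnd s)) => jb; first by rewrite nth_mkseq.
rewrite nth_default ?size_mkseq //; apply/esym/count_memPn/negP => js.
have := bnd_all s [::]; rewrite cats0 => /andP[/allP /(_ _ js) H _].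
by move: H jb; lia.
Qed.

Lemma red_transfer p u s : redL p s -> (forall i, 1 <= i -> mult u i = count_mem i s) ->
  reduced p u.
Proof.
move=> [g Hg] Hm; exists g => i i1; rewrite Hm // => ci.
have iS : i \in s by case: (boolP (i \in s)) => // /count_memPn.
case: (Hg i iS) => [H|[ig cg]]; first by left.
by right; split => //; rewrite Hm // -ig.
Qed.

Lemma Gm_gt0 s : 0 < Gm s.
Proof. by rewrite /Gm muln_gt0 Mf_gt0 andbT prodn_gt0. Qed.

Unset Implicit Arguments.
Theorem lemma3p2 (p m i : nat) (u : ipartition) :
  prime p -> odd p ->
  1 <= (m + i) * p - i ->
  weight u = (m + i) * p - i ->
  degree u <= i.+1 ->
  exists u' : ipartition,
    [/\ reduced p u', weight u' = (m + i) * p - i, degree u' <= i.+1 &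
        (vp p (tau u') <= vp p (tau u))%R].
Proof.
move=> pp _ n1 wu du.
pose s := fm 1 u.
have Hs : forall j, 1 <= j -> mult u j = count_mem j s.
  by case=> // j _; rewrite count_fm /= subn1.
have spos : all (fun x => 0 < x) s by apply/allP => x /mem_fm.
have [W D G] := transfer spos Hs.
have sn : 0 < sumn s by rewrite -W wu.
suff [s' [s'pos red' sm' sz' ineq]] : exists s', [/\ all (fun x => 0 < x) s', redL p s',
    sumn s' = sumn s, size s' <= size s &
    logn p (sumn s' + size s' - 2)`! + logn p (Gm s) <=
    logn p (sumn s + size s - 2)`! + logn p (Gm s')].
  have Hs' : forall j, 1 <= j -> mult (toMult s') j = count_mem j s'.
    by move=> j j1; apply: mult_toMult.
  have [W' D' G'] := transfer s'pos Hs'.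
  exists (toMult s'); split.
  - exact: red_transfer red' Hs'.
  - by rewrite W' sm' -W.
  - by rewrite D'; apply: leq_trans sz' _; rewrite -D.
  - rewrite !vp_tau; last 2 first.
    + by rewrite G Gm_gt0.
    + by rewrite G' Gm_gt0.
    rewrite W' D' G' W D G; move: ineq; lia.
case: (boolP (has (fun x => ~~ (p %| x.+1)) s)) => [hZ|hP].
  exact: topZ pp spos hZ.
have H : forall x, x \in s -> p %| x.+1.
  by move=> x xs; move/hasPn: hP => /(_ x xs); rewrite negbK.
have [s' [s'pos red' sm' sz' ineq]] := topP pp spos H.
exists s'; split => //; first by rewrite sz'.
by rewrite sm' sz' leq_add2l.
Qed.
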